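(* For every positive integer $N$, there are exactly $\varphi(N+1)$ binary words $\mathfrak{s}$ over $\{\mathsf{A},\mathsf{B}\}$ with $\mathsf{P}(\mathfrak{s}) = N$, where $\varphi$ is Euler's totient function.
   Context: $\mathsf{P}(\mathfrak{s})$ denotes the number of distinct words that are subsequences (not necessarily contiguous) of the word $\mathfrak{s}$, the empty word included. *)

(* Defs.v *)
From mathcomp Require Import all_boot.
Set Implicit Arguments. Unset Strict Implicit. Unset Printing Implicit Defensive.

(* Binary words over {A,B}: seq bool (A = false, B = true). *)

Fixpoint subseqs_list (s : seq bool) : seq (seq bool) :=
  if s is x :: s' then
    [seq x :: t | t <- subseqs_list s'] ++ subseqs_list s'
  else [:: [::]].

Definition Psub (s : seq bool) : nat := size (undup (subseqs_list s)).

Example Psub_nil : Psub [::] = 1. Proof. by []. Qed.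
Example Psub_AB : Psub [:: false; true] = 4. Proof. by []. Qed.
Example Psub_AA : Psub [:: false; false] = 3. Proof. by []. Qed.
Example Psub_ABA : Psub [:: false; true; false] = 7. Proof. by []. Qed.

(* Main.v *)
Require Import Defs.
From mathcomp Require Import all_boot.
From mathcomp Require Import zify.

Fixpoint pq (s : seq bool) : nat * nat :=
  if s is x :: w then
    let: (p, q) := pq w in if x then (p, p + q) else (p + q, q)
  else (1, 1).

Fixpoint dec (n p q : nat) : seq bool :=
  if n is n'.+1 then
    if p < q then true :: dec n' p (q - p)
    else if q < p then false :: dec n' (p - q) q else [::]
  else [::].

Lemma mem_subseqs_cons y t w :
  y :: t \in subseqs_list w -> t \in subseqs_list w.
Proof.
elim: w => [//|z w IH] /=; rewrite mem_cat => /orP[/mapP[t' Ht' [_ ->]]|H].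
  by rewrite mem_cat Ht' orbT.
by rewrite mem_cat IH ?orbT.
Qed.

Lemma nil_subseqs w : [::] \in subseqs_list w.
Proof. by elim: w => [//|z w IH] /=; rewrite mem_cat IH orbT. Qed.

Lemma mem_subseqs_same x t w :
  (x :: t \in subseqs_list (x :: w)) = (t \in subseqs_list w).
Proof.
rewrite /= mem_cat; apply/idP/idP.
  by case/orP=> [/mapP[t' Ht' [->]]//|]; apply: mem_subseqs_cons.
by move=> H; rewrite (map_f (cons x) H).
Qed.

Lemma mem_subseqs_diff x y t w : y != x ->
  (y :: t \in subseqs_list (x :: w)) = (y :: t \in subseqs_list w).
Proof.
move=> yx; rewrite /= mem_cat; apply/idP/idP.
  by case/orP=> [/mapP[t' Ht' [Hy _]]|//]; rewrite Hy eqxx in yx.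
by move=> ->; rewrite orbT.
Qed.

Definition starts (b : bool) (t : seq bool) :=
  if t is y :: _ then y == b else false.

Definition cnt s b := count (starts b) (undup (subseqs_list s)).

Lemma size_split (U : seq (seq bool)) :
  size U = count (pred1 [::]) U + count (starts false) U + count (starts true) U.
Proof.
elim: U => [//|t U IH] /=; rewrite IH.
case: t => [|[] t] /=; rewrite ?addnS ?addSn //.
Qed.

Lemma Psub_split s : Psub s = (cnt s false + cnt s true).+1.
Proof.
rewrite /Psub /cnt size_split count_uniq_mem ?undup_uniq //.
by rewrite mem_undup nil_subseqs.
Qed.

Lemma uniq_size_eq (l1 l2 : seq (seq bool)) :
  uniq l1 -> uniq l2 -> l1 =i l2 -> size l1 = size l2.
Proof. by move=> u1 u2 e; apply: perm_size; apply: uniq_perm. Qed.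

Lemma cnt_same x w : cnt (x :: w) x = Psub w.
Proof.
rewrite /cnt /Psub -size_filter.
rewrite -(size_map (cons x) (undup (subseqs_list w))); apply: uniq_size_eq.
- by rewrite filter_uniq ?undup_uniq.
- by rewrite map_inj_uniq ?undup_uniq // => a b [].
move=> t; rewrite mem_filter mem_undup.
case: t => [|y t] /=.
  by apply/esym/mapP=> -[? _].
apply/andP/mapP.
  by case=> /eqP -> H; exists t => //; rewrite mem_undup -(mem_subseqs_same x).
case=> t' Ht' [-> ->]; split => //.
by rewrite (mem_subseqs_same x t' w) -mem_undup.
Qed.

Lemma cnt_diff x y w : y != x -> cnt (x :: w) y = cnt w y.
Proof.
move=> yx; rewrite /cnt -!size_filter; apply: uniq_size_eq.
- by rewrite filter_uniq ?undup_uniq.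
- by rewrite filter_uniq ?undup_uniq.
move=> t; rewrite !mem_filter !mem_undup.
case: t => [|z t] //=.
case: eqP => // ->; by rewrite mem_subseqs_diff.
Qed.

Lemma cnt_pq s : (cnt s false).+1 = (pq s).1 /\ (cnt s true).+1 = (pq s).2.
Proof.
elim: s => [//|x w [IH1 IH2]] /=.
case: (pq w) IH1 IH2 => p q /= IH1 IH2.
case: x => /=.
  by rewrite cnt_diff // cnt_same Psub_split -IH1 -IH2 addSn addnS.
by rewrite (@cnt_diff false true) // cnt_same Psub_split -IH1 -IH2 addSn addnS.
Qed.

Lemma Psub_pq s : Psub s = ((pq s).1 + (pq s).2).-1.
Proof.
by case: (cnt_pq s) => <- <-; rewrite Psub_split addSn addnS.
Qed.

Lemma pq_props s :
  [/\ 0 < (pq s).1, 0 < (pq s).2, coprime (pq s).1 (pq s).2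
    & size s < (pq s).1 + (pq s).2].
Proof.
elim: s => [//|x w] /=.
case: (pq w) => p q /= [p0 q0 cpq sz].
case: x => /=; split => //.
- by rewrite addn_gt0 p0.
- by rewrite /coprime gcdnDl.
- move: sz p0; clear; lia.
- by rewrite addn_gt0 p0.
- by rewrite /coprime gcdnC addnC gcdnDl gcdnC.
- move: sz q0; clear; lia.
Qed.

Lemma dec_pq s n : size s <= n -> dec n (pq s).1 (pq s).2 = s.
Proof.
elim: s n => [|x w IH] [|n] //=.
rewrite ltnS => sz.
have := pq_props w; have := IH _ sz.
case: (pq w) => p q /= Hd [p0 q0 _ _].
case: x => /=.
  by rewrite -{1}[p]addn0 ltn_add2l q0 addKn Hd.
have -> : (p + q < q) = false by apply/negbTE; rewrite -leqNgt leq_addl.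
have -> : (q < p + q) by rewrite -{1}[q]add0n ltn_add2r.
by rewrite addnK Hd.
Qed.

Lemma pq_dec n p q : 0 < p -> 0 < q -> coprime p q -> p + q <= n ->
  pq (dec n p q) = (p, q).
Proof.
elim: n p q => [|n IH] p q p0 q0 cpq hn.
  by move: hn; rewrite leqNgt addn_gt0 p0.
rewrite /=; case: ltngtP => H /=.
- rewrite IH ?subn_gt0 //.
  + by rewrite subnKC // ltnW.
  + by rewrite /coprime -(gcdnDl p) subnKC // ltnW.
  + move: hn H p0; clear; lia.
- rewrite IH ?subn_gt0 //.
  + by rewrite subnK // ltnW.
  + by rewrite /coprime gcdnC -(gcdnDl q) subnKC ?(ltnW H) // gcdnC.
  + move: hn H q0; clear; lia.
- move: cpq; rewrite H /coprime gcdnn => /eqP ->; by [].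
Qed.

Lemma sum_count (r : seq nat) (P : pred nat) :
  \sum_(i <- r) (P i : nat) = count P r.
Proof. by elim: r => [|a r IH]; rewrite ?big_nil ?big_cons ?IH. Qed.

Theorem proposition1 (N : nat) (hN : 0 < N) :
  exists L : seq (seq bool),
    [/\ uniq L,
        (forall s : seq bool, s \in L <-> Psub s = N)
      & size L = totient N.+1].
Proof.
set ps := [seq p <- iota 1 N | coprime p N.+1].
have Hps p : p \in ps -> [/\ 0 < p, 0 < N.+1 - p, coprime p (N.+1 - p)
                          & p + (N.+1 - p) = N.+1].
  rewrite mem_filter mem_iota => /andP[cp /andP[p1 pN]].
  have pN' : p <= N.+1 by rewrite ltnW // -[N.+1]add1n.
  split => //.
  - by rewrite subn_gt0 -[N.+1]add1n.
  - by rewrite /coprime -(gcdnDl p) subnKC.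
  - by rewrite subnKC.
exists [seq dec N.+1 p (N.+1 - p) | p <- ps]; split.
- rewrite map_inj_in_uniq ?filter_uniq ?iota_uniq // => a b Ha Hb E.
  have [a0 a1 ac aN] := Hps a Ha; have [b0 b1 bc bN] := Hps b Hb.
  have := congr1 (fun s => (pq s).1) E.
  by rewrite !pq_dec // ?aN ?bN.
- move=> s; split.
    case/mapP=> p Hp ->; have [p0 p1 pc pN] := Hps p Hp.
    by rewrite Psub_pq pq_dec // pN.
  rewrite Psub_pq; have [p0 q0 cpq sz] := pq_props s.
  case: (pq s) p0 q0 cpq sz (@dec_pq s) => p q /= p0 q0 cpq sz Hd E.
  have pqN : p + q = N.+1 by rewrite -E prednK // addn_gt0 p0.
  have Hs : s = dec N.+1 p (N.+1 - p).
    by rewrite -pqN addKn Hd // ltnW.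
  rewrite Hs; apply: (map_f (fun p => dec N.+1 p (N.+1 - p))).
    have cp' : coprime p (p + q) by rewrite /coprime gcdnDl.
    rewrite mem_filter mem_iota -pqN cp' p0 /=.
  move: q0 pqN; clear; lia.
- rewrite size_map size_filter totient_count_coprime.
  rewrite /index_iota subn0 -sum_count.
  rewrite [iota 0 N.+1]/= big_cons /coprime gcdn0 eqSS.
  rewrite (_ : (N == 0) = false) ?add0n; last by case: (N) hN.
  by apply: eq_bigr => i _; rewrite /coprime gcdnC.
Qed.
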